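(* For any Banach space $V$ we have $\mathcal{LNE}(V)\le 2\,\mathcal{LE}(V)$.
   Context: For a function $f$ from a subset $X$ of a metric space $(Z,\rho)$ into a Banach space $V$, $L(f)=\sup\{\|f(x)-f(y)\|/\rho(x,y): x\neq y\}$ and $\|f\|_\infty=\sup_{x\in X}\|f(x)\|$. $\mathcal{LE}(V)$ is the infimum of the constants $c$ such that for every metric space $(Z,\rho)$, every $X\subseteq Z$ and every $f:X\to V$ there is an extension $g:Z\to V$ of $f$ with $L(g)\le cL(f)$ ($+\infty$ if none exists). $\mathcal{LNE}(V)$ is the infimum of the constants $c$ such that for every metric space $(Z,\rho)$, every $X\subseteq Z$ and every bounded function $f:X\to V$ there is an extension $g:Z\to V$ of $f$ with $L(g)\le cL(f)$ and $\|g\|_\infty=\|f\|_\infty$ ($+\infty$ if none exists). *)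

(* Defs.v *)
From HB Require Import structures.
From mathcomp Require Import all_boot all_order all_algebra.
From mathcomp Require Import all_classical all_reals all_analysis.
Set Implicit Arguments. Unset Strict Implicit. Unset Printing Implicit Defensive.
Import Order.TTheory GRing.Theory Num.Theory.
Import numFieldNormedType.Exports.
Local Open Scope classical_set_scope.
Local Open Scope ring_scope.

Definition is_metric (R : realType) (Z : Type) (rho : Z -> Z -> R) : Prop :=
  (forall x y, rho x y = 0 <-> x = y) /\
  (forall x y, rho x y = rho y x) /\
  (forall x y z, rho x z <= rho x y + rho y z).

(* L(f) for f restricted to X : sup of ||f x - f y|| / rho x y over x <> y in X;
   0 is added to the set so that the sup over an empty/singleton X is 0
   (all ratios are >= 0, so this does not change the sup otherwise). *)
Definition lipc (R : realType) (V : normedModType R) (Z : Type)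
  (rho : Z -> Z -> R) (X : set Z) (f : Z -> V) : \bar R :=
  ereal_sup ([set 0%E] `|`
    [set r | exists x y, [/\ X x, X y, x <> y & r = (`|f x - f y| / rho x y)%:E]]).

Definition supnorm (R : realType) (V : normedModType R) (Z : Type)
  (X : set Z) (f : Z -> V) : \bar R :=
  ereal_sup ([set 0%E] `|` [set (`|f x|)%:E | x in X]).

Definition LE_ok (R : realType) (V : normedModType R) (c : R) : Prop :=
  forall (Z : Type) (rho : Z -> Z -> R), is_metric rho ->
  forall (X : set Z) (f : Z -> V), (lipc rho X f < +oo)%E ->
  exists g : Z -> V, (forall x, X x -> g x = f x) /\
    (lipc rho setT g <= c%:E * lipc rho X f)%E.

Definition LNE_ok (R : realType) (V : normedModType R) (c : R) : Prop :=
  forall (Z : Type) (rho : Z -> Z -> R), is_metric rho ->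
  forall (X : set Z) (f : Z -> V), (supnorm X f < +oo)%E ->
  (lipc rho X f < +oo)%E ->
  exists g : Z -> V, (forall x, X x -> g x = f x) /\
    (lipc rho setT g <= c%:E * lipc rho X f)%E /\
    supnorm setT g = supnorm X f.

(* infimum of admissible constants; +oo if there is none *)
Definition LE (R : realType) (V : normedModType R) : \bar R :=
  ereal_inf [set c%:E | c in [set c : R | 0 <= c /\ LE_ok V c]].

Definition LNE (R : realType) (V : normedModType R) : \bar R :=
  ereal_inf [set c%:E | c in [set c : R | 0 <= c /\ LNE_ok V c]].

(* Main.v *)
From HB Require Import structures.
From mathcomp Require Import all_boot all_order all_algebra.
From mathcomp Require Import all_classical all_reals all_analysis.
From mathcomp Require Import ring lra.
Set Implicit Arguments. Unset Strict Implicit.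
Import Order.TTheory GRing.Theory Num.Theory.
Import numFieldNormedType.Exports.
Local Open Scope ring_scope.
Require Import Defs.
Local Open Scope classical_set_scope.

Definition retr (R : realType) (V : normedModType R) (M : R) (v : V) : V :=
  if `|v| <= M then v else (M / `|v|) *: v.

Lemma retr_norm (R : realType) (V : normedModType R) (M : R) (v : V) :
  0 <= M -> `|retr M v| <= M.
Proof.
move=> M0; rewrite /retr; case: ifPn => //; rewrite -ltNge => H.
have a0 : 0 < `|v| by apply: le_lt_trans H.
rewrite normrZ ger0_norm ?divr_ge0 // -mulrA mulVf ?mulr1 //; exact: lt0r_neq0.
Qed.

Lemma retr_id (R : realType) (V : normedModType R) (M : R) (v : V) :
  `|v| <= M -> retr M v = v.
Proof. by rewrite /retr => ->. Qed.

Lemma retr_big (R : realType) (V : normedModType R) (M : R) (u v : V) :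
  0 <= M -> M < `|u| -> `|v| <= M -> `|(M / `|u|) *: u - v| <= 2 * `|u - v|.
Proof.
move=> M0 Hu Hv.
have a0 : 0 < `|u| by apply: le_lt_trans Hu.
have e : (M / `|u|) *: u - v = ((M / `|u|) - 1) *: u + (u - v).
  by rewrite scalerBl scale1r addrA subrK.
rewrite e; apply: le_trans (ler_normD _ _) _.
rewrite normrZ.
have -> : `|M / `|u| - 1| * `|u| = `|u| - M.
  rewrite ler0_norm; last first.
    by rewrite subr_le0 ler_pdivrMr // mul1r ltW.
  rewrite opprB mulrBl mul1r -mulrA mulVf ?mulr1 //; exact: lt0r_neq0.
have := ler_dist_dist u v; rewrite ger0_norm ?subr_ge0; last by apply: le_trans Hv (ltW Hu).
lra.
Qed.

Lemma retr_lip (R : realType) (V : normedModType R) (M : R) (u v : V) :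
  0 <= M -> `|retr M u - retr M v| <= 2 * `|u - v|.
Proof.
move=> M0; rewrite /retr.
case: ifPn => Hu; case: ifPn => Hv.
- have := normr_ge0 (u - v); lra.
- rewrite -ltNge in Hv.
  by rewrite -opprB normrN (distrC u v); apply: retr_big.
- rewrite -ltNge in Hu; exact: retr_big.
rewrite -ltNge in Hu; rewrite -ltNge in Hv.
have a0 : 0 < `|u| by apply: le_lt_trans Hu.
have b0 : 0 < `|v| by apply: le_lt_trans Hv.
set a := `|u| in Hu a0 *; set b := `|v| in Hv b0 *.
have e : (M / a) *: u - (M / b) *: v = (M / a) *: (u - v) + (M / a - M / b) *: v.
  by rewrite scalerBr scalerBl addrA subrK.
rewrite e; apply: le_trans (ler_normD _ _) _.
rewrite [X in X + _]normrZ [X in _ + X]normrZ -/b.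
have t0 : 0 <= M / a by rewrite divr_ge0 // ltW.
have t1 : M / a <= 1 by rewrite ler_pdivrMr // mul1r ltW.
have -> : `|M / a - M / b| * b = M / a * `|b - a|.
  rewrite -(ger0_norm (ltW b0)) -normrM (ger0_norm (ltW b0)).
  have -> : (M / a - M / b) * b = M / a * (b - a).
    field; apply/andP; split; exact: lt0r_neq0.
  by rewrite normrM ger0_norm.
rewrite (ger0_norm t0).
have h := ler_dist_dist v u; rewrite -/a -/b (distrC v u) in h.
have d0 := normr_ge0 (u - v).
set t := M / a in t0 t1 *.
set d := `|u - v| in h d0 *.
have := ler_wpM2l t0 h.
nra.
Qed.

Lemma lipc_ge0 (R : realType) (V : normedModType R) (Z : Type)
  (rho : Z -> Z -> R) (X : set Z) (f : Z -> V) : (0 <= lipc rho X f)%E.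
Proof. by apply: ereal_sup_ubound; left. Qed.

Lemma lipc_ratio (R : realType) (V : normedModType R) (Z : Type)
  (rho : Z -> Z -> R) (X : set Z) (f : Z -> V) x y :
  X x -> X y -> x <> y -> ((`|f x - f y| / rho x y)%:E <= lipc rho X f)%E.
Proof. by move=> Xx Xy xy; apply: ereal_sup_ubound; right; exists x, y. Qed.

Lemma supnorm_ge0 (R : realType) (V : normedModType R) (Z : Type)
  (X : set Z) (f : Z -> V) : (0 <= supnorm X f)%E.
Proof. by apply: ereal_sup_ubound; left. Qed.

Lemma metric_pos (R : realType) (Z : Type) (rho : Z -> Z -> R) x y :
  is_metric rho -> x <> y -> 0 < rho x y.
Proof.
move=> [h0 [hs ht]] xy.
have t := ht x y x; rewrite (hs y x) (proj2 (h0 x x) erefl) in t.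
rewrite lt_def; apply/andP; split; last lra.
by apply/eqP => /h0.
Qed.

Lemma key (R : realType) (V : normedModType R) (c : R) :
  0 <= c -> LE_ok V c -> LNE_ok V (2 * c).
Proof.
move=> c0 Hc Z rho mrho X f Hs Hl.
have [g [gX gL]] := Hc Z rho mrho X f Hl.
have s0 := supnorm_ge0 X f.
set M := fine (supnorm X f).
have sM : supnorm X f = M%:E by rewrite fineK // ge0_fin_numE.
have M0 : 0 <= M by rewrite -lee_fin -sM.
have fM : forall x, X x -> `|f x| <= M.
  by move=> x Xx; rewrite -lee_fin -sM; apply: ereal_sup_ubound; right; exists x.
exists (fun z => retr M (g z)); split.
  by move=> x Xx; rewrite gX // retr_id //; exact: fM.
split.
  apply: (@le_trans _ _ (2%:E * lipc rho setT g)%E).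
    apply: ge_ereal_sup => r [->|[x [y [_ _ xy ->]]]].
      by apply: mule_ge0 => //; exact: lipc_ge0.
    have rxy := metric_pos mrho xy.
    apply: (@le_trans _ _ (2 * (`|g x - g y| / rho x y))%:E).
      rewrite lee_fin mulrA; apply: ler_wpM2r; [by rewrite invr_ge0 ltW | exact: retr_lip].
    rewrite EFinM; apply: lee_wpmul2l => //; exact: lipc_ratio.
  by rewrite EFinM -muleA; apply: lee_wpmul2l.
apply/eqP; rewrite eq_le; apply/andP; split.
  apply: ge_ereal_sup => r [->|[x _ <-]]; rewrite sM lee_fin //; exact: retr_norm.
apply: ge_ereal_sup => r [->|[x Xx <-]]; first exact: supnorm_ge0.
by apply: ereal_sup_ubound; right; exists x => //; rewrite gX // retr_id //; exact: fM.
Qed.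

Theorem proposition8p3 (R : realType) (V : completeNormedModType R) :
  (LNE V <= 2%:E * LE V)%E.
Proof.
have K : forall c, 0 <= c -> LE_ok V c -> (LNE V <= (2 * c)%:E)%E.
  move=> c c0 Hc; apply: ereal_inf_lbound; exists (2 * c) => //; split.
    by rewrite mulr_ge0.
  exact: key.
have LE0 : (0 <= LE V)%E.
  by apply: le_ereal_inf_tmp => _ [c [c0 _] <-]; rewrite lee_fin.
case E: (LE V) => [x| |].
- apply/lee_addgt0Pr => e e0.
  have fin : LE V \is a fin_num by rewrite E.
  have e2 : 0 < e / 2 by rewrite divr_gt0.
  have [_ [c [c0 Hc] <-]] := lb_ereal_inf_adherent e2 fin.
  move=> lt; have {}lt : c < x + e / 2 by rewrite -lte_fin EFinD -E.
  apply: le_trans (K c c0 Hc) _; rewrite -EFinM -EFinD lee_fin; lra.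
- by rewrite mulry gtr0_sg // mul1e leey.
- by rewrite E in LE0.
Qed.
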